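(* There exists a $\Gamma_2$-equivariant continuous map $f:S(U'_1\oplus U'_1)\to S(U'_2\oplus V'_1)$.
   Context: $\Gamma_2=S^1\rtimes C_2\cong \mathrm{O}(2)$, where $C_2=\langle a\rangle$ and $a t a^{-1}=t^{-1}$ for $t\in S^1$. For $k\in\mathbb{Z}$, $U'_k$ is the real $2$-dimensional orthogonal $\Gamma_2$-representation on $\mathbb{C}\cong\mathbb{R}^2$ with $t\cdot z=t^kz$ for $t\in S^1$ and $a\cdot z=\bar z$. $V'_1$ is the $1$-dimensional real representation on which $S^1$ acts trivially and $a$ acts by $x\mapsto -x$. $S(\cdot)$ denotes the unit sphere. *)

(* Defs.v *)
From Stdlib Require Import Reals ZArith.
From Coquelicot Require Import Coquelicot.
Open Scope R_scope.

Definition Cpowz (t : C) (k : Z) : C :=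
  match k with
  | Z0 => 1%C
  | Zpos p => Cpow t (Pos.to_nat p)
  | Zneg p => Cinv (Cpow t (Pos.to_nat p))
  end.

(* Gamma_2 = S^1 ⋊ C_2 ≅ O(2): an element is t * a^b with |t| = 1, b : bool
   (b = true means the reflection a is present, element t a). *)
Definition Gamma2 : Type := (C * bool)%type.
Definition in_Gamma2 (g : Gamma2) : Prop := Cmod (fst g) = 1.

(* Action of g = t a^b on U'_k (= C): t a^b . z = t^k * (a^b . z), a.z = conj z. *)
Definition actU (k : Z) (g : Gamma2) (z : C) : C :=
  Cmult (Cpowz (fst g) k) (if snd g then Cconj z else z).

(* Action on V'_1 (= R): S^1 trivial, a acts by -1. *)
Definition actV1 (g : Gamma2) (x : R) : R := if snd g then - x else x.

Definition act_U1U1 (g : Gamma2) (v : C * C) : C * C :=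
  (actU 1 g (fst v), actU 1 g (snd v)).
Definition act_U2V1 (g : Gamma2) (w : C * R) : C * R :=
  (actU 2 g (fst w), actV1 g (snd w)).

Definition S_U1U1 (v : C * C) : Prop := (Cmod (fst v))^2 + (Cmod (snd v))^2 = 1.
Definition S_U2V1 (w : C * R) : Prop := (Cmod (fst w))^2 + (snd w)^2 = 1.

(* Main.v *)
Require Import Defs.
From Stdlib Require Import Reals ZArith Lra.
From Coquelicot Require Import Coquelicot.
Open Scope R_scope.

Definition fa (v : C * C) : R := fst (fst v).
Definition fb (v : C * C) : R := snd (fst v).
Definition fc (v : C * C) : R := fst (snd v).
Definition fd (v : C * C) : R := snd (snd v).

Definition F (v : C * C) : C * R :=
  ((fa v * fa v - fb v * fb v + (fc v * fc v - fd v * fd v),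
    2 * (fa v * fb v + fc v * fd v)), 2 * (fb v * fc v - fa v * fd v)).

Lemma cont_pair {U V W : UniformSpace} (f : U -> V) (g : U -> W) x :
  continuous f x -> continuous g x -> continuous (fun y => (f y, g y)) x.
Proof.
  intros Hf Hg.
  apply (continuous_comp_2 f g pair x Hf Hg).
  eapply continuous_ext. 2: apply continuous_id. intros [p q]; reflexivity.
Qed.

Lemma ca v : continuous fa v.
Proof. unfold fa. apply (continuous_comp (fun v : C * C => fst v) fst).
  destruct v; apply continuous_fst. destruct v as [[p q] r]; apply continuous_fst. Qed.
Lemma cb v : continuous fb v.
Proof. unfold fb. apply (continuous_comp (fun v : C * C => fst v) snd).
  destruct v; apply continuous_fst. destruct v as [[p q] r]; apply continuous_snd. Qed.
Lemma cc v : continuous fc v.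
Proof. unfold fc. apply (continuous_comp (fun v : C * C => snd v) fst).
  destruct v; apply continuous_snd. destruct v as [p [q r]]; apply continuous_fst. Qed.
Lemma cd v : continuous fd v.
Proof. unfold fd. apply (continuous_comp (fun v : C * C => snd v) snd).
  destruct v; apply continuous_snd. destruct v as [p [q r]]; apply continuous_snd. Qed.

Lemma cM {U : UniformSpace} (f g : U -> R) x : continuous f x -> continuous g x ->
  continuous (fun y => f y * g y) x.
Proof. intros; apply (@continuous_mult U R_AbsRing); auto. Qed.
Lemma cP {U : UniformSpace} (f g : U -> R) x : continuous f x -> continuous g x ->
  continuous (fun y => f y + g y) x.
Proof. intros; apply (@continuous_plus U R_AbsRing R_NormedModule); auto. Qed.
Lemma cm {U : UniformSpace} (f g : U -> R) x : continuous f x -> continuous g x ->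
  continuous (fun y => f y - g y) x.
Proof. intros; unfold Rminus. apply cP; auto.
  apply (@continuous_opp U R_AbsRing R_NormedModule (fun y => g y)); auto. Qed.
Lemma cO {U : UniformSpace} (g : U -> R) x : continuous g x ->
  continuous (fun y => - g y) x.
Proof. intros; apply (@continuous_opp U R_AbsRing R_NormedModule (fun y => g y)); auto. Qed.
Lemma cK {U : UniformSpace} (k : R) x : continuous (fun _ : U => k) x.
Proof. apply continuous_const. Qed.

Ltac cmm := apply cM; first [apply ca|apply cb|apply cc|apply cd].
Lemma cF v : continuous F v.
Proof.
  unfold F. apply cont_pair; [apply cont_pair|].
  - apply cP; apply cm; cmm.
  - apply cM; [apply cK|]. apply cP; cmm.
  - apply cM; [apply cK|]. apply cm; cmm.
Qed.

Lemma sq (z : C) : (Cmod z)^2 = fst z * fst z + snd z * snd z.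
Proof. unfold Cmod. rewrite pow2_sqrt. simpl; ring. 
  destruct z; simpl. nra. Qed.

Theorem lemma3p3 :
  exists f : C * C -> C * R,
    (forall v, S_U1U1 v -> S_U2V1 (f v)) /\
    (forall v, S_U1U1 v -> filterlim f (within S_U1U1 (locally v)) (locally (f v))) /\
    (forall (g : Gamma2) v, in_Gamma2 g -> S_U1U1 v ->
        f (act_U1U1 g v) = act_U2V1 g (f v)).
Proof.
  exists F. split; [|split].
  - intros [[a b] [c d]]. unfold S_U1U1, S_U2V1. rewrite !sq. simpl fst; simpl snd.
    unfold F, fa, fb, fc, fd; simpl. intro H.
    transitivity ((a * a + b * b + (c * c + d * d))^2). ring.
    rewrite H; ring.
  - intros v _. eapply filterlim_filter_le_1. apply filter_le_within. apply cF.
  - intros [[t1 t2] e] [[a b] [c d]]. unfold in_Gamma2, S_U1U1. intros Ht _.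
    assert (H : t1*t1 + t2*t2 = 1).
    { pose proof (sq (t1,t2)) as E. simpl in E, Ht. rewrite <- E, Ht. ring. }
    unfold act_U1U1, act_U2V1, actU, actV1, Cpowz, F, fa, fb, fc, fd; simpl.
    destruct e; simpl.
    all: f_equal.
    all: try (unfold Cmult, Cconj; simpl; f_equal; ring).
    all: match goal with |- _ = ?r => transitivity ((t1*t1+t2*t2) * r); [ring | rewrite H; ring] end.
Qed.
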